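(* Let $f$ and $\ell$ be continuous and $\mathbb{X}\times\mathbb{U}$ be compact, and let strict dissipativity hold, i.e., there exist a bounded storage function $\lambda:\mathbb{X}\to\mathbb{R}$ and $\underline\alpha_{\tilde\ell}\in\mathcal{K}_\infty$ such that $\tilde\ell(x,u)=\ell(x,u)-\ell^\star+\lambda(x)-\lambda(f(x,u))\geq\underline\alpha_{\tilde\ell}(\|(x,u)\|_{\Pi^\star})$ for all $x\in\mathbb{X}$ and all $u\in\mathbb{U}$ with $f(x,u)\in\mathbb{X}$. Then there exists $\alpha_1\in\mathcal{K}_\infty$ such that for all $\varepsilon>0$ and all trajectories of length $T$ defined by $\hat x\in\mathbb{X}$ and $\hat u\in\mathbb{U}^T(\hat x)$ satisfying $\|(x_{\hat u}(k,\hat x),\hat u(k))\|_{\Pi^\star}\leq\varepsilon$ for all $k\in\{0,\dots,T-1\}$, it holds that \[ \sum_{k=0}^{T-1}\ell(x_{\hat u}(k,\hat x),\hat u(k))\leq (T+p^\star-1)\ell^\star+T\alpha_1(\varepsilon). \]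
   Context: System $x(k+1)=f(x(k),u(k))$ with constraints $x\in\mathbb{X}$, $u\in\mathbb{U}$, stage cost $\ell$; $x_u(k,x)$ is the state trajectory under input sequence $u$ from $x$, and $\mathbb{U}^T(x)$ the set of feasible input sequences of length $T$. A feasible $p$-periodic orbit is a $p$-tuple $\Pi\in(\mathbb{X}\times\mathbb{U})^p$ with $\Pi_{\mathbb{X}}((k+1)\bmod p)=f(\Pi(k))$; $\|(x,u)\|_\Pi=\min_k\|(x,u)-\Pi(k)\|$. $\ell^\star$ is the infimum over all feasible periodic orbits of the average cost $\frac1p\sum_{k=0}^{p-1}\ell(\Pi(k))$, and $\Pi^\star$ is an optimal orbit of period $p^\star$ attaining it. The stage cost $\ell$ is assumed non-negative without loss of generality (shifting $\ell$ by its minimum on the compact set does not change minimizers). *)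

(* Defs.v *)
From HB Require Import structures.
From mathcomp Require Import all_boot all_order all_algebra.
From mathcomp Require Import all_classical all_reals all_analysis.
Set Implicit Arguments. Unset Strict Implicit. Unset Printing Implicit Defensive.
Import Order.TTheory GRing.Theory Num.Theory.
Import numFieldNormedType.Exports.
Local Open Scope classical_set_scope.
Local Open Scope ring_scope.

Section Defs.
Variables (R : realType) (n m : nat).
Notation X := 'rV[R]_n.
Notation U := 'rV[R]_m.

Definition Kinf (a : R -> R) : Prop :=
  [/\ {within `[0, +oo[%classic, continuous a},
      {in `[0, +oo[ &, {mono a : x y / x < y}} ,
      a 0 = 0 &
      forall M : R, exists s : R, 0 <= s /\ M < a s].

Fixpoint traj (f : X -> U -> X) (x : X) (u : nat -> U) (k : nat) : X :=
  match k with
  | 0 => x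
  | k'.+1 => f (traj f x u k') (u k')
  end.

Definition feasible_inputs (Xs : set X) (Us : set U) (f : X -> U -> X)
    (T : nat) (x : X) (u : nat -> U) : Prop :=
  (forall k, (k < T)%N -> Us (u k)) /\
  (forall k, (k <= T)%N -> Xs (traj f x u k)).

Definition feasible_orbit (Xs : set X) (Us : set U) (f : X -> U -> X)
    (p : nat) (Pi : nat -> X * U) : Prop :=
  [/\ (0 < p)%N,
      (forall k, (k < p)%N -> Xs (Pi k).1 /\ Us (Pi k).2) &
      (forall k, (k < p)%N -> (Pi (k.+1 %% p)%N).1 = f (Pi k).1 (Pi k).2)].

Definition avg_cost (l : X -> U -> R) (p : nat) (Pi : nat -> X * U) : R :=
  (\sum_(k < p) l (Pi k).1 (Pi k).2) / p%:R.

Definition ell_star (Xs : set X) (Us : set U) (f : X -> U -> X)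
    (l : X -> U -> R) : R :=
  inf [set a | exists p Pi, feasible_orbit Xs Us f p Pi /\ a = avg_cost l p Pi].

(* ||(x,u)||_Pi = min_k ||(x,u) - Pi(k)||  (norm on X * U: max of norms) *)
Definition dist_orbit (p : nat) (Pi : nat -> X * U) (z : X * U) : R :=
  \big[Num.min/`|z - Pi 0%N|]_(k < p) `|z - Pi k|.

End Defs.

(* Main.v *)
Require Import Defs.
From HB Require Import structures.
From mathcomp Require Import all_boot all_order all_algebra.
From mathcomp Require Import all_classical all_reals all_analysis.
Import Order.TTheory GRing.Theory Num.Theory.
Import numFieldNormedType.Exports.
Local Open Scope classical_set_scope.
Local Open Scope ring_scope.
From mathcomp Require Import ring lra.
Set Implicit Arguments. Unset Strict Implicit. Unset Printing Implicit Defensive.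
Section C.
Context (R : realType) (B : R) (P : R -> R -> Prop).
Definition Sset (s : R) : set R :=
  [set v | exists δ a, [/\ 0 < δ, 0 <= a, P δ a & v = a + B * s / δ]].
Definition cfun (s : R) : R := inf (Sset s).

Lemma Sset_ne (HB : 0 <= B) (HP : forall δ, 0 < δ -> P δ B) s : Sset s !=set0.
Proof. exists (B + B * s / 1); exists 1, B; split => //; exact: HP. Qed.

Lemma Sset_lb (HB : 0 <= B) s : 0 <= s -> lbound (Sset s) 0.
Proof.
move=> s0 v [δ [a [d0 a0 _ ->]]].
by apply: addr_ge0 => //; apply: divr_ge0 => //; [apply: mulr_ge0|apply: ltW].
Qed.
End C.
Section C2.
Context (R : realType) (B : R) (P : R -> R -> Prop).
Context (HB : 0 <= B) (HP : forall δ, 0 < δ -> P δ B)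
  (HZ : forall γ, 0 < γ -> exists2 δ, 0 < δ & P δ γ).
Local Notation c := (cfun B P).
Local Notation S := (Sset B P).

Lemma c_le s v : 0 <= s -> S s v -> c s <= v.
Proof. move=> s0 Sv; apply: ge_inf => //; exists 0; exact: Sset_lb. Qed.

Lemma c_ge0 s : 0 <= s -> 0 <= c s.
Proof. move=> s0; apply: lb_le_inf; [exact: Sset_ne|exact: Sset_lb]. Qed.

Lemma c_mono s t : 0 <= s -> s <= t -> c s <= c t.
Proof.
move=> s0 st; apply: lb_le_inf; first exact: Sset_ne.
move=> v [δ [a [d0 a0 Pda ->]]].
apply: (@le_trans _ _ (a + B * s / δ)).
  by apply: c_le => //; exists δ, a; split.
rewrite lerD2l ler_pM2r ?invr_gt0 //; exact: ler_wpM2l.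
Qed.

Lemma c_scale s t : 0 < s -> s <= t -> s * c t <= t * c s.
Proof.
move=> s0 st.
have t0 : 0 < t by apply: lt_le_trans st.
suff : s / t * c t <= c s.
  move=> H; have -> : s * c t = t * (s / t * c t).
    by field; rewrite gt_eqF.
  by apply: ler_wpM2l => //; apply: ltW.
apply: lb_le_inf; first exact: Sset_ne.
move=> v [δ [a [d0 a0 Pda ->]]].
have H1 : c t <= a + B * t / δ by apply: c_le; [exact: ltW|exists δ, a; split].
have st1 : s / t <= 1 by rewrite ler_pdivrMr // mul1r.
apply: (@le_trans _ _ (s / t * (a + B * t / δ))).
  by apply: ler_wpM2l => //; apply: divr_ge0; apply: ltW.
rewrite mulrDr lerD //.
  by rewrite -[X in _ <= X]mul1r ler_wpM2r.
have -> : s / t * (B * t / δ) = B * s / δ.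
  by field; rewrite !gt_eqF.
done.
Qed.

Lemma c_small γ δ s : 0 < δ -> 0 <= γ -> P δ γ -> 0 <= s -> c s <= γ + B * s / δ.
Proof. move=> d0 g0 Pdg s0; apply: c_le => //; exists δ, γ; split => //. Qed.

Lemma c0 : c 0 = 0.
Proof.
apply/eqP; rewrite eq_le c_ge0 // andbT.
apply/ler_addgt0Pr => e e0; rewrite add0r.
have [δ d0 Pd] := HZ e0.
by apply: (le_trans (c_small d0 (ltW e0) Pd (lexx 0))); rewrite mulr0 mul0r addr0.
Qed.

Lemma h_cont : continuous (fun s : R => c `|s| : R).
Proof.
move=> x; apply/cvgrPdist_lt => e e0.
have [x0|xn0] := eqVneq x 0.
  have e20 : 0 < e / 2 by rewrite divr_gt0.
  have [δ d0 Pd] := HZ e20.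
  set r := e * δ / (2 * (B + 1)).
  have B1 : 0 < B + 1 by rewrite ltr_wpDl.
  have r0 : 0 < r by rewrite /r divr_gt0 ?mulr_gt0.
  have rE : r * (2 * (B + 1)) = e * δ by rewrite /r; field; rewrite gt_eqF.
  apply/nbhs_ballP; exists r => // t; rewrite /ball /= x0 sub0r normrN normr0 => Ht.
  have h1 := c_small d0 (ltW e20) Pd (normr_ge0 t).
  have h2 := c_mono (lexx 0) (normr_ge0 t).
  have h3 := c_ge0 (lexx 0).
  have h4 : B * `|t| < e * δ / 2.
    have : 0 <= B * (r - `|t|) by apply: mulr_ge0 => //; rewrite subr_ge0 ltW.
    nra.
  have h5 : B * `|t| / δ < e / 2.
    rewrite ltr_pdivrMr //; have -> : e / 2 * δ = e * δ / 2 by field.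
    done.
  rewrite ltr_norml; apply/andP; split; lra.
have s0 : 0 < `|x| by rewrite normr_gt0.
set s := `|x|; set A := c s.
have A0 : 0 <= A by apply: c_ge0; apply: ltW.
set r := Num.min (s / 2) (e * s / (4 * (A + 1))).
have A1 : 0 < A + 1 by rewrite ltr_wpDl.
have r0 : 0 < r by rewrite lt_min !divr_gt0 ?mulr_gt0.
have r1 : r <= s / 2 by rewrite ge_min lexx.
have r2 : r * (4 * (A + 1)) <= e * s.
  have : r <= e * s / (4 * (A + 1)) by rewrite ge_min lexx orbT.
  by rewrite ler_pdivlMr ?mulr_gt0.
apply/nbhs_ballP; exists r => // t; rewrite /ball /= => Ht.
set u := `|t|.
have hu : `|s - u| < r by apply: le_lt_trans (ler_dist_dist _ _) Ht.
move: hu; rewrite ltr_norml => /andP [hu1 hu2].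
have u0 : 0 < u by lra.
have [su|us] := leP s u.
  have m1 : A <= c u by apply: c_mono => //; apply: ltW.
  have m2 : s * c u <= u * A by apply: c_scale.
  have m3 : s * (c u - A) < e * s.
    have : 0 <= (r - (u - s)) * A by apply: mulr_ge0 => //; lra.
    nra.
  have m4 : c u - A < e.
    by move: m3; rewrite [e * s]mulrC ltr_pM2l.
  rewrite ltr_norml; apply/andP; split; lra.
have m1 : c u <= A by apply: c_mono => //; [apply: ltW|apply: ltW].
have m2 : u * A <= s * c u by apply: c_scale => //; apply: ltW.
have m3 : u * (A - c u) < e * u.
  have : 0 <= (r - (s - u)) * A by apply: mulr_ge0 => //; lra.
  nra.
have m4 : A - c u < e.
  by move: m3; rewrite [e * u]mulrC ltr_pM2l.
rewrite ltr_norml; apply/andP; split; lra.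
Qed.
End C2.
Lemma construct (R : realType) (B : R) (P : R -> R -> Prop) :
  0 <= B -> (forall δ, 0 < δ -> P δ B) ->
  (forall γ, 0 < γ -> exists2 δ, 0 < δ & P δ γ) ->
  exists alpha1 : R -> R, Kinf alpha1 /\
    forall eps, 0 < eps -> forall y K Tn : R, 0 <= Tn ->
      (forall δ a, 0 < δ -> 0 <= a -> P δ a -> eps <= δ -> y <= K + Tn * a) ->
      y <= K + Tn * B -> y <= K + Tn * alpha1 eps.
Proof.
move=> HB HP HZ.
pose c := cfun B P.
exists (fun s => c `|s| + s); split.
  split.
  - apply: continuous_subspaceT => x.
    apply: cvgD; [exact: (h_cont HB HP HZ)|exact: cvg_id].
  - move=> x y; rewrite !in_itv /= !andbT => x0 y0.
    apply/idP/idP => H.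
      rewrite ltNge; apply/negP => yx.
      have := c_mono HB HP (y0 : 0 <= y) yx.
      move=> H2; move: H; rewrite !ger0_norm // ltNge => /negP; apply.
      exact: lerD.
    rewrite !ger0_norm //; apply: ler_ltD => //.
    exact: (c_mono HB HP x0 (ltW H)).
  - by rewrite normr0 addr0 /c (c0 HB HP HZ).
  - move=> M; exists (`|M| + 1); split; first by rewrite addr_ge0.
    have := c_ge0 HB HP (normr_ge0 (`|M| + 1)).
    have := ler_norm M.
    rewrite /c; lra.
move=> eps e0 y K Tn T0 Hsmall Hbig.
have [T00|Tpos] := eqVneq Tn 0.
  by rewrite T00 !mul0r in Hbig *.
have Tp : 0 < Tn by rewrite lt_def Tpos.
have : (y - K) / Tn <= c eps.
  apply: lb_le_inf; first exact: Sset_ne.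
  move=> v [δ [a [d0 a0 Pda ->]]].
  rewrite ler_pdivrMr // mulrC.
  have [ed|de] := leP eps δ.
    have := Hsmall δ a d0 a0 Pda ed.
    have : 0 <= Tn * (B * eps / δ) by apply: mulr_ge0 => //; apply: divr_ge0; [apply: mulr_ge0 => //; apply: ltW | apply: ltW].
    rewrite mulrDr; lra.
  have : B <= B * eps / δ.
    by rewrite ler_pdivlMr // ler_wpM2l // ltW.
  move=> H; have : Tn * B <= Tn * (B * eps / δ) by apply: ler_wpM2l.
  rewrite mulrDr; have : 0 <= Tn * a by apply: mulr_ge0.
  lra.
rewrite ler_pdivrMr // => H.
rewrite gtr0_norm //.
have : 0 <= Tn * eps by apply: mulr_ge0 => //; apply: ltW.
rewrite mulrDr; lra.
Qed.
Lemma bigmin_ex (R : realType) (p : nat) (F : nat -> R) (x0 : R) :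
  x0 = \big[Num.min/x0]_(i < p) F i \/
  exists2 k, (k < p)%N & \big[Num.min/x0]_(i < p) F i = F k.
Proof.
elim: p F => [|p IH] F; first by left; rewrite big_ord0.
rewrite big_ord_recl /=.
have [E|[k kp E]] := IH (fun i => F (bump 0 i)).
  rewrite -E.
  have [xy|yx] := leP (F 0%N) x0.
    by right; exists 0%N => //; rewrite min_l.
  by left.
rewrite E; right.
have [xy|yx] := leP (F 0%N) (F k.+1).
  by exists 0%N => //; rewrite min_l.
by exists k.+1 => //; rewrite min_r // ltW.
Qed.

Lemma bigmin_le (R : realType) (p : nat) (F : nat -> R) (x0 : R) j :
  (j < p)%N -> \big[Num.min/x0]_(i < p) F i <= F j.
Proof.
elim: p F j => [//|p IH] F j jp.
rewrite big_ord_recl /=.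
case: j jp => [|j] jp; first by rewrite ge_min lexx.
by rewrite ge_min (IH (fun i => F (bump 0 i))) ?orbT.
Qed.

Lemma bigmin_ge0 (R : realType) (p : nat) (F : nat -> R) (x0 : R) :
  0 <= x0 -> (forall i, 0 <= F i) -> 0 <= \big[Num.min/x0]_(i < p) F i.
Proof.
move=> h0 H; elim/big_ind: _ => // x y hx hy; by rewrite le_min hx hy.
Qed.

Lemma telesc (R : realType) (T : nat) (A B : nat -> R) :
  (forall k, (k.+1 < T.+1)%N -> A k = B k.+1) ->
  \sum_(k < T.+1) (A k - B k) = A T - B 0%N.
Proof.
elim: T => [|T IH] H; first by rewrite big_ord1.
rewrite big_ord_recr /= IH; last by move=> k kT; apply: H; rewrite ltnS ltnW.
by rewrite (H T) //; ring.
Qed.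

Lemma cyc_sum (R : realType) (p : nat) (G : nat -> R) : (0 < p)%N ->
  \sum_(j < p) G ((j.+1) %% p)%N = \sum_(j < p) G j.
Proof.
case: p => [//|p] _.
rewrite big_ord_recr big_ord_recl /= modnn addrC; congr (_ + _).
apply: eq_bigr => i _; rewrite modn_small //=.
by rewrite ltnS.
Qed.

Section Orbit.
Context (R : realType) (n m : nat) (Xs : set 'rV[R]_n) (Us : set 'rV[R]_m)
  (f : 'rV[R]_n -> 'rV[R]_m -> 'rV[R]_n) (l : 'rV[R]_n -> 'rV[R]_m -> R)
  (p : nat) (Pi : nat -> 'rV[R]_n * 'rV[R]_m) (lam : 'rV[R]_n -> R)
  (alpha : R -> R) (ls : R).
Context (orb : feasible_orbit Xs Us f p Pi)
  (Hsum : \sum_(k < p) l (Pi k).1 (Pi k).2 = p%:R * ls)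
  (l0 : forall x u, Xs x -> Us u -> 0 <= l x u)
  (a0 : alpha 0 = 0)
  (Hdis : forall x u, Xs x -> Us u -> Xs (f x u) ->
         alpha (dist_orbit p Pi (x, u)) <= l x u - ls + lam x - lam (f x u)).

Local Notation L j := (l (Pi j).1 (Pi j).2).
Local Notation G j := (lam (Pi j).1).

Lemma dist_self j : (j < p)%N -> dist_orbit p Pi (Pi j) = 0.
Proof.
move=> jp; apply/eqP; rewrite eq_le; apply/andP; split.
  by have := bigmin_le (fun k => `|Pi j - Pi k|) `|Pi j - Pi 0%N| jp; rewrite subrr normr0.
by apply: (@bigmin_ge0 R p (fun k => `|Pi j - Pi k|))...
Qed.

Lemma orbit_eq j : (j < p)%N -> L j = ls + G ((j.+1) %% p)%N - G j.
Proof.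
case: orb => p0 XU Hf.
pose D j := L j - ls + G j - G ((j.+1) %% p)%N.
have D0 : forall j, (j < p)%N -> 0 <= D j.
  move=> i ip; rewrite /D.
  have [Xi Ui] := XU i ip.
  have jp' : ((i.+1) %% p < p)%N by rewrite ltn_pmod.
  have Xf : Xs (f (Pi i).1 (Pi i).2) by rewrite -Hf //; case: (XU _ jp').
  have := Hdis Xi Ui Xf.
  by rewrite -surjective_pairing dist_self // a0 -Hf.
have Ds : \sum_(j < p) D j = 0.
  rewrite (eq_bigr (fun j : 'I_p => (L j - ls) + (G j - G ((j.+1) %% p)%N))); last first.
    by move=> i _; rewrite /D; ring.
  rewrite big_split /= !sumrB Hsum (cyc_sum (fun j => G j)) // sumr_const card_ord.
  rewrite -mulr_natr; ring.
move=> jp.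
have := psumr_eq0P (P := predT) (F := fun j : 'I_p => D j) (fun i _ => D0 i (ltn_ord i)) Ds (i := Ordinal jp) isT.
rewrite /D /=; lra.
Qed.

Lemma ls_ge0 : 0 <= ls.
Proof.
case: orb => p0 XU _.
have : 0 <= p%:R * ls.
  rewrite -Hsum; apply: sumr_ge0 => i _; have [Xi Ui] := XU i (ltn_ord i).
  exact: l0.
by rewrite pmulr_rge0 // ltr0n.
Qed.

Lemma tel_orbit a b : (a <= b)%N -> (b < p)%N ->
  G b - G a = \sum_(a <= j < b) (L j - ls).
Proof.
elim: b => [|b IH] ab bp.
  by move: ab; rewrite leqn0 => /eqP ->; rewrite big_geq // subrr.
move: ab; rewrite leq_eqVlt => /orP [/eqP ->|ab].
  by rewrite big_geq // subrr.
rewrite big_nat_recr //= -IH //; last by rewrite ltnW.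
rewrite orbit_eq; last by rewrite ltnW.
rewrite modn_small //; ring.
Qed.

Lemma part_le a b : (a <= b)%N -> (b <= p)%N ->
  \sum_(a <= j < b) L j <= p%:R * ls.
Proof.
case: orb => p0 XU _.
move=> ab bp; rewrite -Hsum -(big_mkord xpredT (fun j => L j)).
have ap' : (a <= p)%N := leq_trans ab bp.
rewrite (@big_cat_nat _ _ _ a 0 p) //= (@big_cat_nat _ _ _ b a p) //=.
have h1 : 0 <= \sum_(0 <= i < a) L i.
  by rewrite big_nat_cond; apply: sumr_ge0 => i /andP [/andP [_ ia] _]; have [Xi Ui] := XU i (leq_trans ia ap'); exact: l0.
have h2 : 0 <= \sum_(b <= i < p) L i.
  by rewrite big_nat_cond; apply: sumr_ge0 => i /andP [/andP [_ ia] _]; have [Xi Ui] := XU i ia; exact: l0.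
lra.
Qed.

Lemma lam_diff a b : (a < p)%N -> (b < p)%N -> G b - G a <= (p%:R - 1) * ls.
Proof.
move=> ap bp.
have l0' := ls_ge0.
have p1 : (1 <= p)%N by apply: leq_ltn_trans ap.
have [ab|ba] := leqP a b.
  rewrite tel_orbit // sumrB sumr_const_nat -mulr_natr.
  have H := part_le ab (ltnW bp).
  move: ab; rewrite leq_eqVlt => /orP [/eqP E|ab].
    rewrite E subnn big_geq // subrr; apply: mulr_ge0 => //.
    by rewrite mul1r subr_ge0 ler1n.
  have H2 : ls <= ls * (b - a)%:R.
    rewrite -[X in X <= _]mulr1; apply: ler_wpM2l => //.
    by rewrite ler1n subn_gt0.
  rewrite mulrBl mul1r; lra.
have := tel_orbit (ltnW ba) ap; rewrite sumrB sumr_const_nat -mulr_natr.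
have : 0 <= \sum_(b <= i < a) L i.
  by rewrite big_nat_cond; apply: sumr_ge0 => i /andP [/andP [_ ia] _]; have [Xi Ui] := (match orb with And3 _ XU _ => XU i (ltn_trans ia ap) end); exact: l0.
have : ls * (a - b)%:R <= ls * (p - 1)%:R.
  apply: ler_wpM2l => //; rewrite ler_nat.
  by apply: leq_trans (leq_subr _ _) _; rewrite -ltnS subn1 prednK.
move=> h1 h2 h3; rewrite -mulr_natr in h3; have E1 : ((p - 1)%:R : R) = p%:R - 1 by rewrite natrB.
rewrite E1 mulrBr mulr1 in h1.
rewrite [_ * ls]mulrC mulrBr mulr1.
lra.
Qed.
End Orbit.

Lemma cont_ball (R : realType) (n m : nat) (V : normedModType R)
  (A : set ('rV[R]_n * 'rV[R]_m)) (g : 'rV[R]_n * 'rV[R]_m -> V) z0 :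
  {within A, continuous g} -> A z0 -> forall e, 0 < e ->
  exists2 r, 0 < r & forall z, A z -> `|z0 - z| < r -> `|g z0 - g z| < e.
Proof.
move=> /subspace_continuousP gc Az0 e e0.
have := gc z0 Az0; move=> /cvgrPdist_lt /(_ e e0).
rewrite near_withinE => /nbhs_ballP [r r0 Hr].
exists r => // z Az hz; apply: (Hr z) => //; rewrite ball_prod_normE /ball_ /=.
exact: hz.
Qed.

Lemma fst_norm_le (R : realType) (n m : nat) (z : 'rV[R]_n * 'rV[R]_m) :
  `|z.1| <= `|z|.
Proof. by rewrite prod_normE le_max lexx. Qed.

Definition Pgood (R : realType) (n m : nat) (Xs : set 'rV[R]_n) (Us : set 'rV[R]_m)
  (f : 'rV[R]_n -> 'rV[R]_m -> 'rV[R]_n) (l : 'rV[R]_n -> 'rV[R]_m -> R)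
  (p : nat) (Pi : nat -> 'rV[R]_n * 'rV[R]_m) (ls : R) (δ a : R) : Prop :=
  forall (T : nat) (xh : 'rV[R]_n) (uh : nat -> 'rV[R]_m),
      Xs xh -> feasible_inputs Xs Us f T xh uh ->
      (forall k, (k < T)%N -> dist_orbit p Pi (traj f xh uh k, uh k) <= δ) ->
      \sum_(k < T) l (traj f xh uh k) (uh k)
        <= (T%:R + p%:R - 1) * ls + T%:R * a.

Section Core.
Context (R : realType) (n m : nat) (Xs : set 'rV[R]_n) (Us : set 'rV[R]_m)
  (f : 'rV[R]_n -> 'rV[R]_m -> 'rV[R]_n) (l : 'rV[R]_n -> 'rV[R]_m -> R)
  (p : nat) (Pi : nat -> 'rV[R]_n * 'rV[R]_m) (lam : 'rV[R]_n -> R)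
  (alpha : R -> R) (ls : R).
Context (fc : {within Xs `*` Us, continuous (fun z => f z.1 z.2)})
  (lc : {within Xs `*` Us, continuous (fun z => l z.1 z.2)})
  (orb : feasible_orbit Xs Us f p Pi)
  (Hsum : \sum_(k < p) l (Pi k).1 (Pi k).2 = p%:R * ls)
  (l0 : forall x u, Xs x -> Us u -> 0 <= l x u)
  (a0 : alpha 0 = 0)
  (Hdis : forall x u, Xs x -> Us u -> Xs (f x u) ->
         alpha (dist_orbit p Pi (x, u)) <= l x u - ls + lam x - lam (f x u)).

Local Notation L j := (l (Pi j).1 (Pi j).2).
Local Notation G j := (lam (Pi j).1).

Lemma core γ : 0 < γ -> exists2 δ, 0 < δ & Pgood Xs Us f l p Pi ls δ γ.
Proof.
move=> g0.
case: (orb) => p0 XU Hf.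
have AP : forall j, (j < p)%N -> (Xs `*` Us) (Pi j) by move=> j jp; exact: XU.
have near1 : \forall δ \near 0^'+, forall j : 'I_p, forall z,
    (Xs `*` Us) z -> `|z - Pi j| <= δ -> l z.1 z.2 <= L j + γ.
  apply: filter_forall => j.
  have [r r0 Hr] := cont_ball lc (AP j (ltn_ord j)) g0.
  apply: filterS (nbhs_right_lt r0) => δ δr z Az hz.
  have := Hr z Az; rewrite distrC => /(_ (le_lt_trans hz δr)).
  rewrite distrC ltr_distl => /andP [_ h]; lra.
have near2 : \forall δ \near 0^'+, forall ij : 'I_p * 'I_p, forall z w,
    (Xs `*` Us) z -> `|z - Pi ij.2| <= δ -> `|w - Pi ij.1| <= δ ->
    w.1 = f z.1 z.2 -> (Pi ij.1).1 = (Pi ((ij.2).+1 %% p)%N).1.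
  apply: filter_forall => [[i j]] /=.
  have [E|NE] := eqVneq (Pi i).1 (Pi ((j.+1) %% p)%N).1.
    by apply: nearW => δ z w _ _ _ _.
  set d := `|(Pi i).1 - (Pi ((j.+1) %% p)%N).1|.
  have d0 : 0 < d by rewrite normr_gt0 subr_eq0.
  have d20 : 0 < d / 2 by rewrite divr_gt0.
  have [r r0 Hr] := cont_ball fc (AP j (ltn_ord j)) d20.
  have rd : 0 < Num.min r (d / 2) by rewrite lt_min r0 d20.
  apply: filterS (nbhs_right_lt rd) => δ.
  rewrite lt_min => /andP [δr δd] z w Az hz hw hwz.
  exfalso.
  have h1 := Hr z Az; rewrite distrC in h1; have {h1} := h1 (le_lt_trans hz δr).
  rewrite /= -(Hf j (ltn_ord j)) -hwz => h1.
  have h2 : `|w.1 - (Pi i).1| < d / 2.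
    apply: le_lt_trans δd; apply: le_trans hw; exact: (fst_norm_le (w - Pi i)).
  have : d <= `|(Pi i).1 - w.1| + `|w.1 - (Pi ((j.+1) %% p)%N).1|.
    by rewrite /d; apply: le_trans (ler_normD _ _); rewrite addrA subrK.
  rewrite distrC in h2; rewrite distrC in h1.
  lra.
have near0 : \forall δ \near (0:R)^'+, 0 < δ := nbhs_right_gt 0.
have [δ [d0 [H1 H2]]] := filter_ex (filterI near0 (filterI near1 near2)).
exists δ => // T xh uh Xh [fu fx] Hd.
case: T fu fx Hd => [|T'] fu fx Hd.
  rewrite big_ord0 mul0r addr0 add0r; apply: mulr_ge0; last exact: ls_ge0 orb Hsum l0.
  by rewrite subr_ge0 ler1n.
set T := T'.+1.
pose z k := (traj f xh uh k, uh k).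
have Az : forall k, (k < T)%N -> (Xs `*` Us) (z k).
  by move=> k kT; split; [apply: fx; rewrite ltnW | apply: fu].
have : forall k, exists jk, (k < T)%N -> (jk < p)%N /\ `|z k - Pi jk| <= δ.
  move=> k; case: (ltnP k T) => kT; last by exists 0%N.
  have := Hd k kT; rewrite /dist_orbit.
  have [E|[jk jkp E]] := bigmin_ex p (fun i => `|z k - Pi i|) `|z k - Pi 0%N|.
    by rewrite -E => H; exists 0%N.
  by rewrite E => H; exists jk.
move=> /choice [J HJ].
have step1 : \sum_(k < T) l (traj f xh uh k) (uh k) <= \sum_(k < T) (L (J k) + γ).
  apply: ler_sum => k _; have [Jp Jd] := HJ k (ltn_ord k).
  exact: (H1 (Ordinal Jp) (z k) (Az k (ltn_ord k)) Jd).
have step2 : \sum_(k < T) (L (J k) + γ) =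
    \sum_(k < T) (G (((J k).+1) %% p)%N - G (J k)) + T%:R * (ls + γ).
  rewrite (eq_bigr (fun k : 'I_T => (G (((J k).+1) %% p)%N - G (J k)) + (ls + γ))).
    by rewrite big_split /= sumr_const card_ord mulr_natl.
  move=> k _; have [Jp _] := HJ k (ltn_ord k).
  rewrite (orbit_eq orb Hsum a0 Hdis Jp); ring.
have step3 : \sum_(k < T) (G (((J k).+1) %% p)%N - G (J k)) =
    G (((J T').+1) %% p)%N - G (J 0%N).
  rewrite (@telesc R T' (fun k => G (((J k).+1) %% p)%N) (fun k => G (J k))) // => k kT.
  have [Jp Jd] := HJ k (ltnW kT).
  have [Jp' Jd'] := HJ k.+1 kT.
  have := H2 (Ordinal Jp', Ordinal Jp) (z k) (z k.+1) (Az k (ltnW kT)) Jd Jd' erefl.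
  by move=> /= ->.
have step4 : G (((J T').+1) %% p)%N - G (J 0%N) <= (p%:R - 1) * ls.
  apply: (lam_diff orb Hsum l0 a0 Hdis); first by case: (HJ 0%N isT).
  by rewrite ltn_pmod.
move: step1; rewrite step2 step3 => h.
apply: le_trans h _.
have -> : (T%:R + p%:R - 1) * ls + T%:R * γ = (p%:R - 1) * ls + T%:R * (ls + γ) by ring.
by rewrite lerD2r.
Qed.
End Core.

Theorem lemma26 (R : realType) (n m : nat)
  (Xs : set 'rV[R]_n) (Us : set 'rV[R]_m)
  (f : 'rV[R]_n -> 'rV[R]_m -> 'rV[R]_n) (l : 'rV[R]_n -> 'rV[R]_m -> R)
  (pstar : nat) (Pistar : nat -> 'rV[R]_n * 'rV[R]_m) :
  {within Xs `*` Us, continuous (fun z => f z.1 z.2)} ->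
  {within Xs `*` Us, continuous (fun z => l z.1 z.2)} ->
  compact (Xs `*` Us) ->
  (forall x u, Xs x -> Us u -> 0 <= l x u) ->
  feasible_orbit Xs Us f pstar Pistar ->
  avg_cost l pstar Pistar = ell_star Xs Us f l ->
  (exists (lam : 'rV[R]_n -> R) (alpha : R -> R),
      (exists M : R, forall x, Xs x -> `|lam x| <= M) /\
      Kinf alpha /\
      (forall x u, Xs x -> Us u -> Xs (f x u) ->
         alpha (dist_orbit pstar Pistar (x, u))
           <= l x u - ell_star Xs Us f l + lam x - lam (f x u))) ->
  exists alpha1 : R -> R, Kinf alpha1 /\
    forall (eps : R), 0 < eps ->
    forall (T : nat) (xh : 'rV[R]_n) (uh : nat -> 'rV[R]_m),
      Xs xh -> feasible_inputs Xs Us f T xh uh ->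
      (forall k, (k < T)%N ->
         dist_orbit pstar Pistar (traj f xh uh k, uh k) <= eps) ->
      \sum_(k < T) l (traj f xh uh k) (uh k)
        <= (T%:R + pstar%:R - 1) * ell_star Xs Us f l + T%:R * alpha1 eps.
Proof.
move=> fc lc cpt l0 orb Havg [lam [alpha [_ [Ka Hdis]]]].
set ls := ell_star Xs Us f l in Havg Hdis *.
have p0 : (0 < pstar)%N by case: orb.
have Hsum : \sum_(k < pstar) l (Pistar k).1 (Pistar k).2 = pstar%:R * ls.
  move: Havg; rewrite /avg_cost => <-.
  by field; rewrite pnatr_eq0 -lt0n.
have a0 : alpha 0 = 0 by case: Ka.
have ls0 := ls_ge0 orb Hsum l0.
have [B B0 HB] : exists2 B, 0 <= B & forall x u, Xs x -> Us u -> l x u <= B.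
  have := compact_bounded (continuous_compact lc cpt).
  move=> /ex_strict_bound_gt0 [M M0 HM]; exists M; first exact: ltW.
  move=> x u Xx Uu.
  have : `|l x u| < M by apply: (HM (l x u)); exists (x, u).
  by move=> h; apply: ltW; apply: le_lt_trans (ler_norm _) h.
have Hbig : forall T xh uh, Xs xh -> feasible_inputs Xs Us f T xh uh ->
    \sum_(k < T) l (traj f xh uh k) (uh k)
        <= (T%:R + pstar%:R - 1) * ls + T%:R * B.
  move=> T xh uh Xh [fu fx].
  have h1 : \sum_(k < T) l (traj f xh uh k) (uh k) <= \sum_(k < T) B.
    apply: ler_sum => k _; apply: HB; [apply: fx; exact: ltnW | exact: fu].
  rewrite sumr_const card_ord -mulr_natl in h1.
  apply: le_trans h1 _; rewrite lerDr; apply: mulr_ge0 => //.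
  have : (1 <= pstar%:R :> R) by rewrite ler1n.
  have : (0 <= T%:R :> R) by rewrite ler0n.
  lra.
have HPbig : forall δ, 0 < δ -> Pgood Xs Us f l pstar Pistar ls δ B.
  by move=> δ _ T xh uh Xh feas _; apply: Hbig.
have HZ := core fc lc orb Hsum l0 a0 Hdis.
have [alpha1 [Ka1 H1]] := construct B0 HPbig HZ.
exists alpha1; split => // eps e0 T xh uh Xh feas Hd.
apply: H1 => //.
- move=> δ a d0 a00 Pda ed; apply: Pda => // k kT.
  exact: le_trans (Hd k kT) ed.
- exact: (Hbig T xh uh Xh feas).
Qed.
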